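(* Let $(X_n)_{n\ge0}$ be a real-valued process adapted to a filtration $(\mathcal F_n)$ with $\limsup_{n\to\infty}|X_n|=\infty$ a.s. Let $f:\mathbb R\to\mathbb R_+$ satisfy $\sup_x f(x)<\infty$, $\lim_{x\to+\infty}f(x)=0$, and $\inf_{y\le x}f(y)>0$ for every $x\in\mathbb R_+$. Suppose there exists $x_1\in\mathbb R_+$ such that for all $n\ge0$, $$\mathbb E[f(X_{n+1})-f(X_n)\mid\mathcal F_n]\le0\ \text{on }\{X_n>x_1\},\qquad \mathbb E[f(-X_{n+1})-f(-X_n)\mid\mathcal F_n]\le0\ \text{on }\{X_n<-x_1\}.$$ Then $\lim_{n\to\infty}X_n\in\{-\infty,+\infty\}$ a.s. *)

(* Defs.v *)
From HB Require Import structures.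
From mathcomp Require Import all_boot all_order all_algebra.
From mathcomp Require Import all_classical all_reals all_analysis.
Set Implicit Arguments. Unset Strict Implicit. Unset Printing Implicit Defensive.
Import Order.TTheory GRing.Theory Num.Theory.
Import numFieldNormedType.Exports.
Local Open Scope classical_set_scope.
Local Open Scope ring_scope.

Definition sub_sigma_algebra d (T : measurableType d) (G : set (set T)) :=
  sigma_algebra setT G /\ G `<=` measurable.

Definition filtration d (T : measurableType d) (F : nat -> set (set T)) :=
  (forall n, sub_sigma_algebra (F n)) /\ (forall n m, (n <= m)%N -> F n `<=` F m).

Definition G_measurable d (T : measurableType d) (R : realType)
  (G : set (set T)) (g : T -> R) :=
  forall B : set R, measurable B -> G (g @^-1` B).

Definition adapted d (T : measurableType d) (R : realType)
  (F : nat -> set (set T)) (X : nat -> T -> R) :=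
  forall n, G_measurable (F n) (X n).

Definition is_cond_exp d (T : measurableType d) (R : realType)
  (P : probability T R) (G : set (set T)) (Y g : T -> R) :=
  [/\ G_measurable G g,
      P.-integrable setT (EFin \o g) &
      forall A, G A ->
        (\int[P]_(x in A) (g x)%:E = \int[P]_(x in A) (Y x)%:E)%E].

(* Main.v *)
Require Import Defs.
From HB Require Import structures.
From mathcomp Require Import all_boot all_order all_algebra.
From mathcomp Require Import all_classical all_reals all_analysis.
From mathcomp Require Import measurable_realfun.
Import Order.TTheory GRing.Theory Num.Theory.
Import numFieldNormedType.Exports.
Local Open Scope classical_set_scope.
Local Open Scope ring_scope.

Section sigma_lemmas.
Context {d : measure_display} {T : measurableType d} {G : set (set T)}.
Hypothesis hG : sigma_algebra setT G.
Lemma sG0 : G set0. Proof. by case: hG. Qed.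
Lemma sGC A : G A -> G (~` A).
Proof. by case: hG => _ hC _ GA; rewrite -setTD; exact: hC. Qed.
Lemma sGU A B : G A -> G B -> G (A `|` B).
Proof.
case: hG => _ _ hU GA GB; rewrite -bigcup2E; apply: hU => -[|[|n]] //=.
exact: sG0.
Qed.
Lemma sGT : G setT. Proof. by rewrite -setC0; apply: sGC; exact: sG0. Qed.
Lemma sGI A B : G A -> G B -> G (A `&` B).
Proof. by move=> GA GB; rewrite -[A `&` B]setCK setCI; apply/sGC/sGU; apply: sGC. Qed.
End sigma_lemmas.

Lemma meas_if (R : realType) (b : R -> bool) (a1 a2 k : nat) :
  measurable [set y | b y] -> measurable [set y : R | (if b y then a1 else a2) = k].
Proof.
move=> mb.
have [h1|h1] := eqVneq a1 k; have [h2|h2] := eqVneq a2 k.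
- rewrite (_ : [set y | _] = setT) //; apply/seteqP; split=> y //= _; by case: ifP.
- rewrite (_ : [set y | _] = [set y | b y]) //; apply/seteqP; split=> y /=;
    case: ifP => // _ /eqP; rewrite (negbTE h2) //.
- rewrite (_ : [set y | _] = ~` [set y | b y]); first exact: measurableC.
  apply/seteqP; split=> y /=; case: ifP => //.
  by move=> _ /eqP; rewrite (negbTE h1).
- rewrite (_ : [set y | _] = set0) //; apply/seteqP; split=> y //=.
  by case: ifP => _ /eqP; rewrite ?(negbTE h1) ?(negbTE h2).
Qed.

Section core.
Context d (T : measurableType d) (R : realType) (P : probability T R).
Variables (F : nat -> set (set T)) (Y : nat -> T -> R) (f : R -> R) (x1 : R).
Hypothesis hF : filtration F.
Hypothesis hY : adapted F Y.
Hypothesis mf : measurable_fun setT f.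
Hypothesis f0 : forall y, 0 <= f y.
Hypothesis hstep : forall n G, F n G -> G `<=` [set w | x1 < Y n w] ->
  (\int[P]_(w in G) (f (Y n.+1 w))%:E <= \int[P]_(w in G) (f (Y n w))%:E)%E.

Variables (x K c eps : R).

Definition step (j : nat) (y : R) : nat :=
  match j with 0 => if K < y then 1 else 0 | 1 => if y <= x then 2 else 1 | _ => 2 end.

Fixpoint ph (N : nat) (w : T) : nat :=
  match N with 0 => step 0 (Y 0 w) | N'.+1 => step (ph N' w) (Y N'.+1 w) end.

Lemma FN n : sigma_algebra setT (F n). Proof. exact: (hF.1 n).1. Qed.
Lemma Fmeas n A : F n A -> measurable A. Proof. exact: (hF.1 n).2. Qed.
Lemma FY n B : measurable B -> F n (Y n @^-1` B). Proof. exact: hY. Qed.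
Lemma mY n : measurable_fun setT (Y n).
Proof. by move=> _ B mB; rewrite setTI; apply: Fmeas; exact: FY. Qed.

Lemma meas_step j k : measurable [set y : R | step j y = k].
Proof.
case: j => [|[|j]] /=.
- apply: meas_if; rewrite (_ : [set y | K < y] = setT `&` (fun y => K < y) @^-1` [set true]).
    by apply: measurable_fun_ltr => //; exact: measurable_cst.
  by rewrite setTI.
- apply: meas_if; rewrite (_ : [set y | y <= x] = setT `&` (fun y => y <= x) @^-1` [set true]).
    by apply: measurable_fun_ler => //; exact: measurable_cst.
  by rewrite setTI.
- have [<-|h] := eqVneq 2%N k; first by rewrite (_ : [set y | _] = setT) //; apply/seteqP; split.
  rewrite (_ : [set y | _] = set0) //; apply/seteqP; split=> y //= /eqP.
  by rewrite (negbTE h).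
Qed.

Lemma phF_gen N (pv : T -> nat) : (forall j, F N [set w | pv w = j]) ->
  forall k, F N [set w | step (pv w) (Y N w) = k].
Proof.
move=> hpv k.
set S := fun j => Y N @^-1` [set y | step j y = k].
have FS j : F N (S j) by apply: FY; exact: meas_step.
have hG := FN N.
rewrite (_ : [set w | _] = ([set w | pv w = 0%N] `&` S 0%N) `|` ([set w | pv w = 1%N] `&` S 1%N)
   `|` (~` ([set w | pv w = 0%N] `|` [set w | pv w = 1%N]) `&` S 2%N)).
  apply: sGU => //; first (apply: sGU => //; apply: sGI => //).
  apply: sGI => //; apply: sGC => //; exact: sGU.
apply/seteqP; split=> w /=; rewrite /S /=.
  case: (pv w) => [|[|j]] /= h.
  - by left; left.
  - by left; right.
  - by right; split => // -[].
case: (pv w) => [|[|j]] //=.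
  all: move=> [[[h e]|[h e]]|[h e]]; try congruence; exfalso; apply: h; by [left|right].
Qed.

Lemma phF N k : F N [set w | ph N w = k].
Proof.
elim: N k => [|N IH] k.
  apply: (@phF_gen 0 (fun _ => 0%N)) => j.
  have [<-|h] := eqVneq 0%N j.
    rewrite (_ : [set w | _] = setT); first exact: (sGT (FN 0)).
    by apply/seteqP; split.
  rewrite (_ : [set w | _] = set0); first exact: (sG0 (FN 0)).
  by apply/seteqP; split=> w //= /eqP; rewrite (negbTE h).
apply: (@phF_gen N.+1 (ph N)) => j.
exact: (hF.2 N N.+1 (leqnSn N)) (IH j).
Qed.

Hypothesis hx : x1 <= x.
Hypothesis hxK : x < K.
Hypothesis hc : 0 < c.
Hypothesis hcf : forall y, y <= x -> c <= f y.
Hypothesis heps : forall y, K < y -> f y <= eps.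

Lemma eps0 : 0 <= eps.
Proof. apply: (le_trans (f0 (K + 1))); apply: heps; by rewrite ltrDl. Qed.

Definition Phi N w : R :=
  if ph N w == 0%N then eps else if ph N w == 1%N then f (Y N w) else c.

Definition prev N w := if N is N'.+1 then ph N' w else 0%N.

Lemma phE N w : ph N w = step (prev N w) (Y N w).
Proof. by case: N. Qed.

Lemma step_le2 j y : (step j y <= 2)%N.
Proof. by case: j => [|[|j]] /=; repeat case: ifP. Qed.

Lemma ph_le2 N w : (ph N w <= 2)%N.
Proof. rewrite phE; exact: step_le2. Qed.

Lemma Phi_ge0 N w : 0 <= Phi N w.
Proof.
rewrite /Phi; case: ifP => _; first exact: eps0.
case: ifP => _ //; exact: ltW.
Qed.

Lemma ph1_gt N w : ph N w = 1%N -> x < Y N w.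
Proof.
rewrite phE; case: (prev N w) => [|[|j]] /=.
- by case: ifP => // h _; exact: lt_trans hxK h.
- by case: ifP => // h _; rewrite ltNge h.
- by [].
Qed.

Lemma Phi_on N w : ph N w = 1%N -> Phi N w = f (Y N w).
Proof. by rewrite /Phi => ->. Qed.

Lemma Phi_2 N w : ph N w = 2%N -> Phi N w = c.
Proof. by rewrite /Phi => ->. Qed.

Lemma Phi_step_on N w : ph N w = 1%N -> Phi N.+1 w <= f (Y N.+1 w).
Proof.
move=> h; rewrite /Phi /= h /=.
by case hle: (Y N.+1 w <= x) => /=; [exact: hcf|exact: lexx].
Qed.

Lemma Phi_step_off N w : ph N w != 1%N -> Phi N.+1 w <= Phi N w.
Proof.
move=> h; rewrite /Phi /=.
have := ph_le2 N w; case: (ph N w) h => [|[|[|j]]] //= _ _.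
by case hK: (K < Y N.+1 w) => /=; [exact: heps|exact: lexx].
Qed.

Lemma Phi0_le w : Phi 0 w <= eps.
Proof. by rewrite /Phi /=; case hK: (K < Y 0 w) => /=; [exact: heps|exact: lexx]. Qed.

Lemma mph N k : measurable [set w | ph N w = k].
Proof. exact: Fmeas (phF N k). Qed.

Lemma mPhi N : measurable_fun setT (Phi N).
Proof.
have mb k : measurable_fun setT (fun w => ph N w == k).
  apply: (measurable_fun_bool true); rewrite setTI.
  rewrite (_ : _ @^-1` _ = [set w | ph N w = k]); first exact: mph.
  by apply/seteqP; split => w /= /eqP.
rewrite /Phi; apply: measurable_fun_ifT; [exact: mb|exact: measurable_cst|].
apply: measurable_fun_ifT; [exact: mb| |exact: measurable_cst].
exact: measurableT_comp mf (mY N).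
Qed.

Lemma mEPhi N : measurable_fun setT (EFin \o Phi N).
Proof. exact/measurable_EFinP/mPhi. Qed.

Lemma mEPhiS N D : measurable_fun D (EFin \o Phi N).
Proof. by apply: (measurable_funS measurableT) => //; exact: mEPhi. Qed.

Lemma mEfY n D : measurable_fun D (fun w => (f (Y n w))%:E).
Proof.
apply: (measurable_funS measurableT) => //.
apply/measurable_EFinP; exact: measurableT_comp mf (mY n).
Qed.

Local Open Scope ereal_scope.
Definition I N := \int[P]_w (Phi N w)%:E.

Lemma I_step N : I N.+1 <= I N.
Proof.
set G := [set w | ph N w = 1%N].
have mG : measurable G := mph N 1.
have mGc : measurable (~` G) := measurableC mG.
have hsplit N' : I N' = \int[P]_(w in G) (Phi N' w)%:E + \int[P]_(w in ~` G) (Phi N' w)%:E.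
  rewrite /I -(setUv G) ge0_integral_setU //.
  - exact: mEPhiS.
  - by move=> w _; rewrite lee_fin; exact: Phi_ge0.
  - by rewrite disj_set2E setICr.
rewrite !hsplit; apply: leeD.
- apply: (@le_trans _ _ (\int[P]_(w in G) (f (Y N.+1 w))%:E)).
    apply: ge0_le_integral => //.
    + by move=> w _; rewrite lee_fin; exact: Phi_ge0.
    + exact: mEPhiS.
    + exact: mEfY.
    + by move=> w /= h; rewrite lee_fin; exact: Phi_step_on.
  apply: (le_trans (hstep _ _ (phF N 1%N) _)).
    by move=> w /ph1_gt; exact: le_lt_trans hx.
  apply: ge0_le_integral => //.
  + by move=> w _; rewrite lee_fin.
  + exact: mEfY.
  + exact: mEPhiS.
  + by move=> w /= h; rewrite Phi_on.
- apply: ge0_le_integral => //.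
  + by move=> w _; rewrite lee_fin; exact: Phi_ge0.
  + exact: mEPhiS.
  + exact: mEPhiS.
  + by move=> w /= h; rewrite lee_fin; apply: Phi_step_off; apply/eqP.
Qed.

Lemma I_le N : I N <= eps%:E.
Proof.
elim: N => [|N IH]; last exact: le_trans (I_step N) IH.
rewrite /I; apply: (@le_trans _ _ (\int[P]_w (cst eps%:E) w)).
  apply: ge0_le_integral => //.
  + by move=> w _; rewrite lee_fin; exact: Phi_ge0.
  + exact: mEPhi.
  + by move=> w _; rewrite lee_fin; exact: Phi0_le.
rewrite integral_cst //. have -> : (P : {measure set T -> \bar R}) setT = 1 by exact: probability_setT. by rewrite mule1.
Qed.

Lemma P2 N : c%:E * P [set w | ph N w = 2%N] <= eps%:E.
Proof.
set A := [set w | ph N w = 2%N].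
have mA : measurable A := mph N 2.
rewrite -(@integral_cst _ _ _ P A mA).
apply: le_trans (I_le N).
apply: (@le_trans _ _ (\int[P]_(w in A) (Phi N w)%:E)).
  apply: ge0_le_integral => //.
  + by move=> w _; rewrite lee_fin; exact: ltW.
  + exact: mEPhiS.
  + by move=> w /= h; rewrite Phi_2.
rewrite /I; apply: ge0_subset_integral => //.
- exact: mEPhi.
- by move=> w _; rewrite lee_fin; exact: Phi_ge0.
Qed.

Lemma ph2_up N M w : (N <= M)%N -> ph N w = 2%N -> ph M w = 2%N.
Proof.
move=> /subnK <- h; elim: (M - N)%N => [//|k IH].
by rewrite addSn /= IH.
Qed.

Lemma U_le : P (\bigcup_N [set w | ph N w = 2%N]) <= (eps / c)%:E.
Proof.
have mA N : measurable [set w | ph N w = 2%N] := mph N 2.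
have nd : nondecreasing_seq (fun N => [set w | ph N w = 2%N]).
  by move=> N M NM; apply/subsetPset => w /=; exact: ph2_up.
have h := @nondecreasing_cvg_mu _ _ _ P _ mA (bigcupT_measurable _ mA) nd.
rewrite -(cvg_lim _ h) //; apply: lime_le; first exact: cvgP h.
apply: nearW => N /=.
by rewrite mulrC EFinM lee_pdivlMl //; exact: P2.
Qed.

Local Close Scope ereal_scope.
Lemma ph_mono N w : (ph N w <= ph N.+1 w)%N.
Proof.
rewrite [ph N.+1 w]/=; have := ph_le2 N w.
by case: (ph N w) => [|[|[|j]]] //= _; case: ifP.
Qed.

Lemma ph_monoN N M w : (N <= M)%N -> (ph N w <= ph M w)%N.
Proof.
move=> /subnK <-; elim: (M - N)%N => // k IH.
by rewrite addSn; exact: leq_trans IH (ph_mono _ _).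
Qed.

Lemma ph_pos N w : K < Y N w -> (0 < ph N w)%N.
Proof.
rewrite phE; case: (prev N w) => [|[|j]] /= h.
- by rewrite h.
- by case: ifP.
- by [].
Qed.

Lemma ph_hit N M w : (0 < ph N w)%N -> (N < M)%N -> Y M w <= x -> ph M w = 2%N.
Proof.
case: M => // M h NM hM /=.
have := ph_le2 M w.
have : (0 < ph M w)%N := leq_trans h (ph_monoN N M w NM).
by case: (ph M w) => [|[|[|j]]] //= _ _; rewrite hM.
Qed.

Lemma bad_sub w : (exists n, K < Y n w) ->
  (forall m, exists n, (m <= n)%N /\ Y n w <= x) ->
  (\bigcup_N [set w | ph N w = 2%N]) w.
Proof.
move=> [n hn] /(_ n.+1) [m [nm hm]]; exists m => //=.
exact: (ph_hit n m w (ph_pos n w hn) nm hm).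
Qed.

End core.

Section negl.
Context d (T : measurableType d) (R : realType) (P : probability T R).
Variables (F : nat -> set (set T)) (Y : nat -> T -> R) (f : R -> R) (x1 : R).
Hypothesis hF : filtration F.
Hypothesis hY : adapted F Y.
Hypothesis mf : measurable_fun setT f.
Hypothesis f0 : forall y, 0 <= f y.
Hypothesis hstep : forall n G, F n G -> G `<=` [set w | x1 < Y n w] ->
  (\int[P]_(w in G) (f (Y n.+1 w))%:E <= \int[P]_(w in G) (f (Y n w))%:E)%E.

Lemma bad_negl x c : x1 <= x -> 0 < c -> (forall y, y <= x -> c <= f y) ->
  f y @[y --> +oo] --> (0 : R) ->
  P.-negligible [set w | (forall K, exists n, K < Y n w) /\
                         (forall m, exists n, (m <= n)%N /\ Y n w <= x)].
Proof.
move=> hx hc hcf flim.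
have hK j : exists K, x < K /\ forall y, K < y -> f y <= c / j.+1%:R.
  have e0 : 0 < c / j.+1%:R by rewrite divr_gt0.
  have := (cvgrPdist_lt _ _).1 flim _ e0.
  case=> M [Mreal HM].
  exists (Num.max M x + 1); split.
    by apply: (@le_lt_trans _ _ (Num.max M x)); [rewrite le_max lexx orbT|rewrite ltrDl].
  move=> y hy.
  have My : M < y.
    apply: le_lt_trans hy; apply: (@le_trans _ _ (Num.max M x)); first by rewrite le_max lexx.
    by rewrite lerDl.
  have := HM y My; rewrite sub0r normrN ger0_norm //; exact: ltW.
have [Kf hKf] := choice hK.
set U := fun j => \bigcup_N [set w | ph d T R Y x (Kf j) N w = 2%N].
have mU j : measurable (U j).
  by apply: bigcupT_measurable => N; exact: (@mph d T R F Y hF hY).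
exists (\bigcap_j U j); split.
- exact: bigcapT_measurable.
- have mZ : measurable (\bigcap_j U j) := bigcapT_measurable mU.
  have hZ j : (P (\bigcap_j U j) <= (j.+1%:R^-1)%:E)%E.
    apply: (@le_trans _ _ (P (U j))).
      by apply: le_measure; rewrite ?inE //; exact: bigcap_inf.
    apply: le_trans (@U_le _ _ _ P F Y f x1 hF hY mf f0 hstep _ _ _ _ hx (hKf j).1 hc hcf (hKf j).2) _.
    by rewrite lee_fin mulrAC divff ?gt_eqF // mul1r.
  apply/eqP; rewrite eq_le measure_ge0 andbT.
  have := measure_ge0 P (\bigcap_j U j).
  case E: (P (\bigcap_j U j)) => [r| |] //.
  + move=> r0; rewrite lee_fin leNgt; apply/negP => rpos.
    have := hZ (Num.trunc r^-1); rewrite E lee_fin.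
    rewrite -[r]invrK lef_pV2 ?posrE ?invr_gt0 ?ltr0n //.
    by rewrite !invrK leNgt truncnS_gt.
  + by move=> _; have := hZ 0%N; rewrite E.
- move=> w [h1 h2] j _.
  exact: (@bad_sub _ _ _ Y x (Kf j) w (h1 (Kf j)) h2).
Qed.

End negl.

Section condstep.
Context d (T : measurableType d) (R : realType) (P : probability T R).
Variables (F : nat -> set (set T)) (f : R -> R) (x1 : R).
Hypothesis hF : filtration F.
Hypothesis mf : measurable_fun setT f.
Hypothesis f0 : forall y, 0 <= f y.

Lemma cond_step (Z : nat -> T -> R) (M : R) : adapted F Z -> (forall y, f y <= M) ->
  (forall n, exists g, is_cond_exp P (F n) (fun w => f (Z n.+1 w) - f (Z n w)) g /\
      {ae P, forall w, x1 < Z n w -> g w <= 0}) ->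
  forall n G, F n G -> G `<=` [set w | x1 < Z n w] ->
  (\int[P]_(w in G) (f (Z n.+1 w))%:E <= \int[P]_(w in G) (f (Z n w))%:E)%E.
Proof.
move=> hZ fM h n G FG GZ.
have [g [[gm gi geq] gle]] := h n.
have mG : measurable G := (hF.1 n).2 _ FG.
have mZ k : measurable_fun setT (Z k).
  by move=> _ B mB; rewrite setTI; apply: (hF.1 k).2; exact: hZ.
have mg : measurable_fun setT g.
  by move=> _ B mB; rewrite setTI; apply: (hF.1 n).2; exact: gm.
have int k : P.-integrable G (EFin \o (fun w => f (Z k w))).
  apply: measurable_bounded_integrable => //.
  - by apply: le_lt_trans (probability_le1 P mG) _; rewrite ltry.
  - by apply: (measurable_funS measurableT) => //; exact: measurableT_comp mf (mZ k).
  - exists M; split; first exact: num_real.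
    move=> y My w _ /=; rewrite ger0_norm //; exact: ltW (le_lt_trans (fM _) My).
have key : (\int[P]_(w in G) (g w)%:E <= 0)%E.
  rewrite (ae_eq_integral (fun w => (Num.min (g w) 0)%:E)) //.
  - rewrite (eq_integral (fun w => - ((- Num.min (g w) 0)%:E)))%E; last first.
      by move=> w _; rewrite EFinN oppeK.
    rewrite integral_ge0N; first by rewrite oppe_le0; apply: integral_ge0 => w _;
      rewrite lee_fin oppr_ge0 ge_min lexx orbT.
    by move=> w _; rewrite lee_fin oppr_ge0 ge_min lexx orbT.
  - apply: (measurable_funS measurableT) => //; exact/measurable_EFinP.
  - apply: (measurable_funS measurableT) => //; apply/measurable_EFinP.
    by apply: measurable_minr => //; exact: measurable_cst.
  - apply: filterS gle => w hw Gw; congr EFin; rewrite min_l //; exact/hw/GZ.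
move: key; rewrite geq //.
rewrite (eq_integral (fun w => (f (Z n.+1 w))%:E - (f (Z n w))%:E))%E; last first.
  by move=> w _; rewrite EFinB.
by rewrite integralB_EFin // sube_le0.
Qed.

End condstep.

Theorem lemma3p5 (d : measure_display) (T : measurableType d) (R : realType)
  (P : probability T R) (F : nat -> set (set T)) (X : nat -> T -> R)
  (f : R -> R) (x1 : R) :
  filtration F ->
  adapted F X ->
  {ae P, forall w, limn_esup (fun n => (`|X n w|)%:E) = +oo%E} ->
  measurable_fun setT f ->
  (forall x, 0 <= f x) ->
  (exists M : R, forall x, f x <= M) ->
  f x @[x --> +oo] --> (0 : R) ->
  (forall x : R, 0 <= x -> exists c : R, 0 < c /\ forall y, y <= x -> c <= f y) ->
  0 <= x1 ->
  (forall n : nat, exists g : T -> R,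
      is_cond_exp P (F n) (fun w => f (X n.+1 w) - f (X n w)) g /\
      {ae P, forall w, x1 < X n w -> g w <= 0}) ->
  (forall n : nat, exists g : T -> R,
      is_cond_exp P (F n) (fun w => f (- X n.+1 w) - f (- X n w)) g /\
      {ae P, forall w, X n w < - x1 -> g w <= 0}) ->
  {ae P, forall w, (X ^~ w) @ \oo --> +oo \/ (X ^~ w) @ \oo --> -oo}.
Proof.
move=> hF hX hsup mf f0 [M fM] flim hc x10 hpos hneg.
pose nX := fun n w => - X n w.
have hnX : adapted F nX.
  move=> n B mB.
  have mN : measurable ((fun y : R => - y) @^-1` B).
    have hid : measurable_fun setT (fun y : R => y) by exact: measurable_id.
    have := @measurable_funN _ _ _ setT (fun y : R => y) hid measurableT _ mB.
    by rewrite setTI.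
  exact: hX n _ mN.
have stepX := @cond_step _ _ _ P F f x1 hF mf f0 X M hX fM hpos.
have stepN : forall n G, F n G -> G `<=` [set w | x1 < nX n w] ->
  (\int[P]_(w in G) (f (nX n.+1 w))%:E <= \int[P]_(w in G) (f (nX n w))%:E)%E.
  apply: (@cond_step _ _ _ P F f x1 hF mf f0 nX M hnX fM) => n.
  have [g [hg hae]] := hneg n; exists g; split => //.
  by apply: filterS hae => w hw hlt; apply: hw; rewrite -ltrNr.
have ck k : exists c : R, 0 < c /\ forall y, y <= x1 + k%:R -> c <= f y.
  by apply: hc; apply: addr_ge0.
have negX k : P.-negligible [set w | (forall K, exists n, K < X n w) /\
      (forall m, exists n, (m <= n)%N /\ X n w <= x1 + k%:R)].
  have [c [c0 hcf]] := ck k.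
  apply: (@bad_negl _ _ _ P F X f x1 hF hX mf f0 stepX _ c _ c0 hcf flim).
  by rewrite lerDl.
have negN k : P.-negligible [set w | (forall K, exists n, K < nX n w) /\
      (forall m, exists n, (m <= n)%N /\ nX n w <= x1 + k%:R)].
  have [c [c0 hcf]] := ck k.
  apply: (@bad_negl _ _ _ P F nX f x1 hF hnX mf f0 stepN _ c _ c0 hcf flim).
  by rewrite lerDl.
have aeX : {ae P, forall w, forall k, ~ ((forall K, exists n, K < X n w) /\
      (forall m, exists n, (m <= n)%N /\ X n w <= x1 + k%:R))}.
  apply: ae_foralln => k; apply: negligibleS (negX k) => w /=; exact: contrapT.
have aeN : {ae P, forall w, forall k, ~ ((forall K, exists n, K < nX n w) /\
      (forall m, exists n, (m <= n)%N /\ nX n w <= x1 + k%:R))}.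
  apply: ae_foralln => k; apply: negligibleS (negN k) => w /=; exact: contrapT.
move: hsup aeX aeN; apply: filterS3 => w hs hp hq.
have unb : forall K, exists n, K < `|X n w|.
  move=> K; apply: contrapT => hK.
  have hle n : `|X n w| <= K.
    by rewrite leNgt; apply/negP => h; apply: hK; exists n.
  have : (limn_esup (fun n => (`|X n w|)%:E) <= K%:E)%E.
    rewrite limn_esup_lim; apply: lime_le; first exact: is_cvg_esups.
    by apply: nearW => n; apply: ge_ereal_sup => _ [m _ <-]; rewrite lee_fin.
  by rewrite hs.
have [hup|hup] := pselect (forall K, exists n, K < X n w).
  left; apply/cvgryPge => A.
  pose k := (Num.trunc A).+1.
  have [m hm] : exists m, forall n, (m <= n)%N -> x1 + k%:R < X n w.
    apply: contrapT => H; apply: (hp k); split => // m; apply: contrapT => H2.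
    apply: H; exists m => n mn; rewrite ltNge; apply/negP => h; apply: H2.
    by exists n.
  exists m => // n /= mn.
  apply: ltW; apply: lt_trans (hm n mn).
  apply: (lt_le_trans (truncnS_gt A)); by rewrite lerDr.
right.
have [K0 hK0] : exists K0, forall n, X n w <= K0.
  apply: contrapT => H; apply: hup => K; apply: contrapT => H2; apply: H.
  exists K => n; rewrite leNgt; apply/negP => h; apply: H2; by exists n.
have hupN : forall K, exists n, K < nX n w.
  move=> K; have [n hn] := unb (Num.max K K0); exists n; rewrite /nX.
  have [xpos|xneg] := leP 0 (X n w).
    move: hn; rewrite ger0_norm // => hn; exfalso.
    have h1 : K0 <= Num.max K K0 by rewrite le_max lexx orbT.
    by have := lt_le_trans (le_lt_trans h1 hn) (hK0 n); rewrite ltxx.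
  move: hn; rewrite ltr0_norm // => hn; apply: le_lt_trans hn.
  by rewrite le_max lexx.
apply/cvgrNyPle => A.
pose k := (Num.trunc (- A)).+1.
have [m hm] : exists m, forall n, (m <= n)%N -> x1 + k%:R < nX n w.
  apply: contrapT => H; apply: (hq k); split => // m; apply: contrapT => H2.
  apply: H; exists m => n mn; rewrite ltNge; apply/negP => h; apply: H2.
  by exists n.
exists m => // n /= mn.
have := hm n mn; rewrite /nX => h.
rewrite -lerN2; apply: ltW; apply: lt_trans h.
apply: (lt_le_trans (truncnS_gt (- A))); by rewrite lerDr.
Qed.
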